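(* Let $\Sigma$ be an alphabet with at least three letters. If $f$ and $g$ are unary congruence preserving functions $\mathcal{T}(\Sigma)\to\mathcal{T}(\Sigma)$ such that $f(a)=g(a)$ for all $a\in\Sigma$, then for all $t\in\mathcal{T}(\Sigma)$, $f(t)$ and $g(t)$ are similar.
   Context: Let $\Sigma$ be an alphabet not containing $0,1$. A binary tree over $\Sigma$ is a finite set $t \subseteq \{0,1\}^*\Sigma$ such that for any $ua, vb \in t$ with $ua \neq vb$, $u$ is not a prefix of $v$ and $v$ is not a prefix of $u$; $\mathcal{T}(\Sigma)$ is the set of such trees, $\mathbf 0=\emptyset$, each letter $a$ is identified with $\{a\}$, and $t\star t' = 0.t\cup 1.t'$. A congruence is an equivalence relation on $\mathcal{T}(\Sigma)$ compatible with $\star$. A function $f\colon\mathcal{T}(\Sigma)\to\mathcal{T}(\Sigma)$ is congruence preserving if for every congruence $\sim$, $t\sim t'$ implies $f(t)\sim f(t')$. Every map $\Sigma\to\mathcal{T}(\Sigma)$ extends uniquely to an endomorphism of $\langle\mathcal{T}(\Sigma),\star\rangle$. For $a\in\Sigma$, $\nu_a$ is the endomorphism sending every letter to $a$; $t,t'$ are similar if $\nu_a(t)=\nu_a(t')$ for some (equivalently every) $a\in\Sigma$. *)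

(* Defs.v *)
From HB Require Import structures.
From mathcomp Require Import all_boot.
From mathcomp Require Import finmap.
Set Implicit Arguments. Unset Strict Implicit. Unset Printing Implicit Defensive.
Local Open Scope fset_scope.

(* A word u a with u in {0,1}^* and a in Sigma is encoded as the pair (u, a),
   with 0 = false and 1 = true. *)
Definition word (S : finType) := (seq bool * S)%type.

Definition is_tree (S : finType) (t : {fset word S}) : bool :=
  all (fun x => all (fun y => (x == y) || (~~ prefix x.1 y.1 && ~~ prefix y.1 x.1))
                    (enum_fset t)) (enum_fset t).

Record tree (S : finType) := Tree { tval :> {fset word S}; tvalP : is_tree tval }.
HB.instance Definition _ (S : finType) := [isSub for @tval S].
HB.instance Definition _ (S : finType) := [Equality of tree S by <:].

Lemma is_treeP (S : finType) (t : {fset word S}) :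
  reflect (forall x y, x \in t -> y \in t -> x != y ->
             ~~ prefix x.1 y.1 && ~~ prefix y.1 x.1) (is_tree t).
Proof.
apply: (iffP allP) => [H x y xt yt nxy | H x xt].
  by have /allP/(_ y yt) := H x xt; rewrite (negbTE nxy).
apply/allP => y yt; case: eqP => [//|/eqP nxy] /=; exact: H.
Qed.

Definition shift (S : finType) (b : bool) (t : {fset word S}) : {fset word S} :=
  [fset (b :: x.1, x.2) | x in t].

Definition star_raw (S : finType) (t t' : {fset word S}) : {fset word S} :=
  shift false t `|` shift true t'.

Lemma star_is_tree (S : finType) (t t' : tree S) : is_tree (star_raw t t').
Proof.
have sh : forall b (u : tree S) x, x \in shift b u ->
    exists2 y, y \in (u : {fset _}) & x = (b :: y.1, y.2).
  move=> b u x /imfsetP [y yu ->]; by exists y.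
apply/is_treeP => x y; rewrite !inE => /orP Hx /orP Hy nxy.
have key : forall b c (u v : tree S) x y, x \in shift b u -> y \in shift c v ->
   (b != c) || ((u == v) && (b == c)) -> x != y ->
   ~~ prefix x.1 y.1 && ~~ prefix y.1 x.1.
  move=> b c u v x1 y1 /sh [x0 x0u ->] /sh [y0 y0v ->] /orP [bc|/andP[/eqP uv /eqP bc]] nxy1 /=.
    by rewrite (negbTE bc) eq_sym (negbTE bc).
  subst; rewrite eqxx /=; apply: (elimT (is_treeP _) (tvalP v)) => //.
  by apply: contraNneq nxy1 => ->.
case: Hx => Hx; case: Hy => Hy.
- by apply: (key false false t t) => //; rewrite !eqxx.
- by apply: (key false true t t').
- by apply: (key true false t' t).
- by apply: (key true true t' t') => //; rewrite !eqxx.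
Qed.

Definition star (S : finType) (t t' : tree S) : tree S := Tree (star_is_tree t t').

Lemma empty_is_tree (S : finType) : is_tree (fset0 : {fset word S}).
Proof. by apply/is_treeP => x y; rewrite inE. Qed.
Definition tree0 (S : finType) : tree S := Tree (@empty_is_tree S).

Lemma letter_is_tree (S : finType) (a : S) : is_tree [fset ([::], a)].
Proof. by apply/is_treeP => x y; rewrite !inE => /eqP -> /eqP ->; rewrite eqxx. Qed.
Definition letter (S : finType) (a : S) : tree S := Tree (letter_is_tree a).

Definition congruence (S : finType) (R : tree S -> tree S -> Prop) : Prop :=
  [/\ (forall t, R t t), (forall t t', R t t' -> R t' t),
      (forall t1 t2 t3, R t1 t2 -> R t2 t3 -> R t1 t3) &
      (forall t1 t1' t2 t2', R t1 t1' -> R t2 t2' -> R (star t1 t2) (star t1' t2'))].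

Definition congruence_preserving (S : finType) (f : tree S -> tree S) : Prop :=
  forall R : tree S -> tree S -> Prop, congruence R ->
    forall t t', R t t' -> R (f t) (f t').

(* nu_a: the endomorphism sending every letter to a; explicitly
   nu_a(t) = { u a | u b in t } (each leaf relabelled by a). *)
Lemma nu_is_tree (S : finType) (a : S) (t : tree S) :
  is_tree [fset (x.1, a) | x in (t : {fset word S})].
Proof.
apply/is_treeP => x y /imfsetP [x0 x0t ->] /imfsetP [y0 y0t ->] nxy /=.
apply: (elimT (is_treeP _) (tvalP t)) => //.
by apply: contraNneq nxy => ->.
Qed.
Definition nu (S : finType) (a : S) (t : tree S) : tree S := Tree (nu_is_tree a t).

Lemma nu_star (S : finType) (a : S) (t t' : tree S) :
  nu a (star t t') = star (nu a t) (nu a t').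
Proof.
apply: val_inj => /=; apply/fsetP => x; apply/imfsetP/idP.
  move=> [y]; rewrite !inE => /orP [] /imfsetP [z zt ->] ->; apply/orP.
    by left; apply/imfsetP; exists (z.1, a) => //; apply/imfsetP; exists z.
  by right; apply/imfsetP; exists (z.1, a) => //; apply/imfsetP; exists z.
rewrite !inE => /orP [] /imfsetP [z /imfsetP [w wt ->] ->].
  by exists (false :: w.1, w.2) => //; rewrite inE; apply/orP; left; apply/imfsetP; exists w.
by exists (true :: w.1, w.2) => //; rewrite inE; apply/orP; right; apply/imfsetP; exists w.
Qed.

Lemma nu_letter (S : finType) (a b : S) : nu a (letter b) = letter a.
Proof.
apply: val_inj => /=; apply/fsetP => x; apply/imfsetP/idP.
  by move=> [y]; rewrite !inE => /eqP -> ->.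
by rewrite inE => /eqP ->; exists ([::], b); rewrite ?inE.
Qed.

Definition similar (S : finType) (t t' : tree S) : Prop :=
  exists a : S, nu a t = nu a t'.

(* Main.v *)
Require Import Defs.
From mathcomp Require Import all_boot.
From mathcomp Require Import finmap.
Set Implicit Arguments. Unset Strict Implicit. Unset Printing Implicit Defensive.
Local Open Scope fset_scope.

Section Aux.
Variable S : finType.

Lemma in_shift_cons b (s : {fset word S}) b' r e :
  ((b' :: r, e) \in shift b s) = (b' == b) && ((r, e) \in s).
Proof.
apply/imfsetP/andP => [[y ys [-> -> ->]]|[/eqP -> rs]]; first by rewrite eqxx -surjective_pairing.
by exists (r, e).
Qed.

Lemma in_shift_nil b (s : {fset word S}) e : (([::], e) \in shift b s) = false.
Proof. by apply/imfsetP => -[y _ []]. Qed.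

Lemma in_star_nil (s1 s2 : tree S) e : (([::], e) \in (star s1 s2 : {fset _})) = false.
Proof. by rewrite /= !inE !in_shift_nil. Qed.

Lemma in_star_cons (s1 s2 : tree S) b r e :
  ((b :: r, e) \in (star s1 s2 : {fset _})) = ((r, e) \in ((if b then s2 else s1) : {fset _})).
Proof. rewrite /= !inE !in_shift_cons; by case: b; rewrite ?andbT ?andbF ?orbF. Qed.

Definition kerP (P : tree S -> word S -> Prop) (s s' : tree S) := forall x, P s x <-> P s' x.

Lemma kerP_cong (P : tree S -> word S -> Prop) :
  (forall s1 s2 e, ~ P (star s1 s2) ([::], e)) ->
  (forall s1 s2 b r e, P (star s1 s2) (b :: r, e) <-> P (if b then s2 else s1) (r, e)) ->
  congruence (kerP P).
Proof.
move=> H0 Hc; split.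
- by move=> t x.
- by move=> t t' H x; split => /H.
- by move=> t1 t2 t3 H1 H2 x; split => [/H1/H2|/H2/H1].
- move=> t1 t1' t2 t2' H1 H2 [[|b r] e]; first by split => /H0.
  rewrite !Hc; case: b; [exact: H2|exact: H1].
Qed.

Definition PE (a : S) (s : tree S) (x : word S) := x \in (s : {fset _}) /\ x.2 <> a.

Definition PP (c : S) (T : tree S) (s : tree S) (x : word S) :=
  (x \in (s : {fset _}) /\ x.2 <> c) \/
  exists v w, x.1 = v ++ w /\ (v, c) \in (s : {fset _}) /\ (w, x.2) \in (T : {fset _}).

Lemma PE_cong a : congruence (kerP (PE a)).
Proof.
apply: kerP_cong => [s1 s2 e|s1 s2 b r e]; rewrite /PE.
  by rewrite in_star_nil => -[].
by rewrite in_star_cons.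
Qed.

Lemma PP_cong c T : congruence (kerP (PP c T)).
Proof.
apply: kerP_cong => [s1 s2 e|s1 s2 b r e]; rewrite /PP /=.
  rewrite in_star_nil => -[[]//|[v [w []]]].
  by case: v => //= _; rewrite in_star_nil => -[].
rewrite in_star_cons; split => -[H|[v [w [Hvw [Hv Hw]]]]]; try by left.
- case: v Hvw Hv => [|b' v] /=; first by rewrite in_star_nil.
  move=> [<- ->]; rewrite in_star_cons => Hv; right; by exists v, w.
- by right; exists (b :: v), w; rewrite /= Hvw in_star_cons.
Qed.

Lemma nu_cong a : congruence (fun s s' : tree S => nu a s = nu a s').
Proof.
split => //; first by move=> ? ? ? -> ->.
by move=> t1 t1' t2 t2' H1 H2; rewrite !nu_star H1 H2.
Qed.

Lemma nu_nu a (t : tree S) : nu a (nu a t) = nu a t.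
Proof.
apply: val_inj => /=; apply/fsetP => x; apply/imfsetP/idP.
  move=> [y /imfsetP [z zt ->] ->]; by apply/imfsetP; exists z.
move=> xt; exists x => //; case/imfsetP: xt => z zt -> //.
Qed.

Lemma nu_label a (t : tree S) x : x \in (nu a t : {fset _}) -> x.2 = a.
Proof. by case/imfsetP => z _ ->. Qed.

End Aux.

Theorem mainTheorem3 (S : finType) (HS : 3 <= #|S|)
  (f g : tree S -> tree S)
  (Hf : congruence_preserving f) (Hg : congruence_preserving g)
  (Hfg : forall a : S, f (letter a) = g (letter a)) :
  forall t : tree S, similar (f t) (g t).
Proof.
move=> t.
have [a _] : exists a : S, true.
  by case: (pickP (@predT S)) => [a|H]; [exists a| move: HS; rewrite (eq_card0 H)].
have [c ca] : exists c : S, c != a.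
  case: (pickP (predC1 a)) => [c /= H|H]; first by exists c.
  move: HS; have: #|S| <= 1.
    rewrite -(card1 a); apply: subset_leq_card; apply/subsetP => x _.
    by rewrite inE; move: (H x) => /= /negbFE.
  by move=> H1 H2; have := leq_trans H2 H1.
exists a.
set T := nu a t.
have HT : forall x, x \in (T : {fset _}) -> x.2 = a by move=> x; apply: nu_label.
have E1 : forall h, congruence_preserving h -> nu a (h t) = nu a (h T).
  by move=> h Hh; apply: (Hh _ (nu_cong a)); rewrite /T nu_nu.
rewrite E1 // [RHS]E1 //; congr (nu a _).
have RE : kerP (PE a) (letter a) T.
  move=> x; rewrite /PE; split => -[Hx Hne].
    by move: Hx; rewrite /= inE => /eqP Hx; rewrite Hx in Hne.
  by have := HT x Hx.
have RP : kerP (PP c T) (letter c) T.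
  move=> x; rewrite /PP; split.
    case=> [[Hx Hne]|[v [w [Hvw [Hv Hw]]]]].
      by move: Hx; rewrite /= inE => /eqP Hx; rewrite Hx in Hne.
    move: Hv; rewrite /= inE => /eqP [Hv]; subst v.
    have Hx2 := HT _ Hw; rewrite /= in Hx2; left; split; last by rewrite Hx2 => Hac; move: ca; rewrite Hac eqxx.
    by rewrite [x]surjective_pairing Hvw.
  case=> [[Hx Hne]|[v [w [Hvw [Hv Hw]]]]]; last by have := HT _ Hv; move/eqP: ca.
  right; exists [::], x.1; split => //; rewrite /= inE eqxx -surjective_pairing; split => //.
have HE : kerP (PE a) (f T) (g T).
  have H1 := Hf _ (PE_cong a) _ _ RE; have H2 := Hg _ (PE_cong a) _ _ RE.
  by rewrite Hfg in H1; move=> x; rewrite -H1 H2.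
have HP : kerP (PP c T) (f T) (g T).
  have H1 := Hf _ (PP_cong c T) _ _ RP; have H2 := Hg _ (PP_cong c T) _ _ RP.
  by rewrite Hfg in H1; move=> x; rewrite -H1 H2.
have key : forall X Y : tree S, kerP (PE a) X Y -> kerP (PP c T) X Y ->
    forall x, x \in (X : {fset _}) -> x \in (Y : {fset _}).
  move=> X Y HXY PXY x xX.
  have [xa|xa] := eqVneq x.2 a; last by case: (proj1 (HXY x) (conj xX (elimN eqP xa))).
  have : PP c T X x by left; split => //; rewrite xa; apply/eqP; rewrite eq_sym.
  move/PXY => [[]//|[v [w [Hvw [Hv Hw]]]]].
  have /HXY [HvX _] : PE a Y (v, c) by split => //; apply/eqP.
  have := elimT (is_treeP _) (tvalP X) _ _ HvX xX.
  have -> : (v, c) != x by apply/eqP => Hx; move: ca; rewrite -xa -Hx eqxx.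
  by move=> /(_ isT); rewrite /= Hvw prefix_prefix.
apply: val_inj; apply/fsetP => x; apply/idP/idP; apply: key => // y; split => /=.
- by move/HE.
- by move/HE.
- by move/HP.
- by move/HP.
Qed.
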